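(* With the sequence $(f^{(k)},g^{(k)})_{k\ge0}$, $d_k$ and $\Delta_k$ defined as in the context, for every $k\ge 0$: (A) if $k$ is even then $\Delta_k=0$, and if $k$ is odd then $\Delta_k=1$ and $d_k=1$; (B) $(f^{(k+1)},g^{(k+1)})=(f^{(k)},\,z\,g^{(k)})$ if $k$ is even, and $(f^{(k+1)},g^{(k+1)})=(x f^{(k)}+g^{(k)},\,z f^{(k)})$ if $k$ is odd; (C) $|f^{(k+1)}|=\lfloor (k+3)/2\rfloor$; (D) $f^{(k+1)}(0,1)=g^{(k+1)}(0,1)=1$.
   Context: $\mathbb{F}=\mathrm{GF}(2)$, $R=\mathbb{F}[x,z]$, $|\cdot|$ is total degree. Let $(r_0,r_1,\ldots)$ be the binary sequence with $r_i=1$ if $i=2^j-1$ for some $j\ge 0$ and $r_i=0$ otherwise, i.e. $(1,1,0,1,0,0,0,1,0^7,1,\ldots)$. For $n\ge1$ its inverse form is $R^{(1-n)}=\sum_{j=1-n}^{0}r_{-j}\,x^{j}z^{1-n-j}\in\mathbb{F}[x^{-1},z^{-1}]$, a homogeneous Laurent form of degree $1-n$. For a form $f\in R$ and such a form $G$, $\Delta(f;G)$ is the coefficient of $x^{|f|+|G|}z^0$ in the product $f\cdot G$ computed in $\mathbb{F}[x^{\pm1},z^{\pm1}]$ if $|f|+|G|\le 0$, and $0$ otherwise. Define forms recursively: $(f^{(0)},g^{(0)})=(x+z,z)$; for $k\ge0$ let $d_k=|g^{(k)}|-|f^{(k)}|$ and $\Delta_k=\Delta(f^{(k)};R^{(-1-k)})$,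 and set $(f^{(k+1)},g^{(k+1)})=(f^{(k)},zg^{(k)})$ if $\Delta_k=0$; $=(f^{(k)}+x^{-d_k}g^{(k)},\,zg^{(k)})$ if $\Delta_k=1$ and $d_k\le0$; $=(x^{d_k}f^{(k)}+g^{(k)},\,zf^{(k)})$ if $\Delta_k=1$ and $d_k>0$. *)

(* Defs.v *)
From HB Require Import structures.
From mathcomp Require Import all_boot all_order all_algebra.
From mathcomp Require Import mpoly.
Set Implicit Arguments. Unset Strict Implicit. Unset Printing Implicit Defensive.
Import Order.TTheory GRing.Theory Num.Theory.
Local Open Scope ring_scope.

Notation F2 := 'F_2.
Notation R2 := {mpoly F2[2]}.
Definition X : R2 := 'X_(0 : 'I_2).
Definition Z : R2 := 'X_(1 : 'I_2).

(* Total degree |f| of a (nonzero) form: msize f = 1 + total degree. *)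
Definition tdeg (f : R2) : nat := (msize f).-1.

Definition rbit (i : nat) : bool := [exists j : 'I_i.+1, i.+1 == 2 ^ j]%N.
Definition rcoef (i : nat) : F2 := (rbit i)%:R.

(* Delta(f; R^(1-n)) for n >= 1.  R^(1-n) = sum_{j=1-n}^0 r_{-j} x^j z^(1-n-j);
   writing j = -i (0 <= i <= n-1), its monomials are r_i x^(-i) z^(1-n+i).
   The coefficient of x^(|f|+1-n) z^0 in the Laurent product f * R^(1-n) is
   the sum over monomials m of f and i < n with matching exponents;
   it is 0 if |f| + 1 - n > 0. *)
Definition Delta (f : R2) (n : nat) : F2 :=
  let e : int := (tdeg f)%:Z + (1 - n%:Z) in
  if e <= 0 then
    \sum_(m <- msupp f) \sum_(i < n)
       (if (((m (0 : 'I_2))%:Z - i%:Z == e) &&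
            ((m (1 : 'I_2))%:Z + (1 - n%:Z + i%:Z) == 0))
        then f@_m * rcoef i else 0)
  else 0.

Definition dd (p : R2 * R2) : int := (tdeg p.2)%:Z - (tdeg p.1)%:Z.

(* Delta_k = Delta(f^(k); R^(-1-k)), i.e. n = k + 2. *)
Definition Deltak (k : nat) (p : R2 * R2) : F2 := Delta p.1 k.+2.

(* One step of the recursion (Delta_k in GF(2) is 0 or 1). *)
Definition step (k : nat) (p : R2 * R2) : R2 * R2 :=
  let f := p.1 in let g := p.2 in let d := dd p in
  if Deltak k p == 0 then (f, Z * g)
  else if d <= 0 then (f + X ^+ `|d|%N * g, Z * g)
  else (X ^+ `|d|%N * f + g, Z * f).

Fixpoint fg (k : nat) : R2 * R2 :=
  match k with
  | 0 => (X + Z, Z)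
  | k'.+1 => step k' (fg k')
  end.

Definition pt01 : 'I_2 -> F2 := fun i => if i == 0 :> nat then 0 else 1.

(* Main.v *)
Require Import Defs.
From HB Require Import structures.
From mathcomp Require Import all_boot all_order all_algebra.
From mathcomp Require Import mpoly.
From mathcomp Require Import zify ring.
Import Order.TTheory GRing.Theory Num.Theory.
Local Open Scope ring_scope.


Ltac mylia := rewrite -?muln2; lia.

Lemma F2_add_self (x : F2) : x + x = 0.
Proof. case: x => [[|[|//]]] ? ; by apply/val_inj. Qed.
Lemma F2_cases (x : F2) : x = 0 \/ x = 1.
Proof. case: x => [[|[|//]]] ?; [left|right]; exact/val_inj. Qed.
Lemma F2_10 : (1 : F2) != 0. Proof. by []. Qed.

Lemma rcoef0 : rcoef 0 = 1.
Proof. rewrite /rcoef /rbit; have -> : [exists j : 'I_1, (1 == 2 ^ j)%N] by apply/existsP; exists ord0. by []. Qed.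

Lemma rbit_odd i : rbit i.*2.+1 = rbit i.
Proof.
rewrite /rbit; apply/existsP/existsP => [[j /eqP hj]|[j /eqP hj]].
- have jpos : (0 < j)%N.
    case: (posnP j) hj => // -> /=; rewrite expn0; mylia.
  move: hj; rewrite -(prednK jpos) expnS => hj.
  have hlt := ltn_expl j.-1 (isT : (1 < 2)%N).
  have hjl : (j.-1 < i.+1)%N.
    move: hj hlt; move: (2 ^ j.-1)%N => t; mylia.
  exists (Ordinal hjl) => /=. apply/eqP. move: hj; move: (2 ^ j.-1)%N => t; mylia.
- have hlt := ltn_expl j (isT : (1 < 2)%N).
  have hjl : (j.+1 < (i.*2.+1).+1)%N.
    move: hj hlt; move: (2 ^ j)%N => t; mylia.
  exists (Ordinal hjl) => /=; apply/eqP; rewrite expnS.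
  move: hj; move: (2 ^ j)%N => t; mylia.
Qed.

Lemma rbit_even i : rbit i.*2.+2 = false.
Proof.
rewrite /rbit; apply/existsP => [[j /eqP hj]].
case: (posnP j) hj => [->|jp]; first by rewrite expn0.
rewrite -(prednK jp) expnS; move: (2 ^ j.-1)%N => t; mylia.
Qed.

Lemma rcoef_odd i : rcoef i.*2.+1 = rcoef i.
Proof. by rewrite /rcoef rbit_odd. Qed.
Lemma rcoef_even i : rcoef i.*2.+2 = 0.
Proof. by rewrite /rcoef rbit_even. Qed.

Definition sh (c : nat -> F2) (i : nat) : F2 := if i is i'.+1 then c i' else 0.

Fixpoint pp (a : nat) : nat -> F2 :=
  match a with
  | 0 => fun i => (i == 0)%N%:R
  | S b => match b with
           | 0 => fun i => (i <= 1)%N%:R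
           | S c => fun i => pp b i + sh (sh (pp c)) i
           end
  end.

Lemma ppSS a i : pp a.+2 i = pp a.+1 i + sh (sh (pp a)) i.
Proof. by []. Qed.
Lemma pp0 i : pp 0 i = (i == 0)%N%:R. Proof. by []. Qed.
Lemma pp1 i : pp 1 i = (i <= 1)%N%:R. Proof. by []. Qed.
Lemma sh0 c : sh c 0 = 0. Proof. by []. Qed.
Lemma shS c i : sh c i.+1 = c i. Proof. by []. Qed.
Arguments pp : simpl never.
Arguments sh : simpl never.

Lemma pp_top a : pp a a = 1 /\ (forall i, (a < i)%N -> pp a i = 0).
Proof.
elim/ltn_ind: a => -[|[|a]] IH.
- by split => [|[|i] //]; rewrite pp0.
- by split => [|[|[|i]] //]; rewrite pp1.
- have [IH1a IH1b] := IH a.+1 (ltnSn _).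
  have [IH0a IH0b] := IH a (ltnW (ltnSn _)).
  split.
    by rewrite ppSS !shS IH1b // IH0a add0r.
  move=> [|[|i]] // hi; rewrite ppSS !shS IH1b ?IH0b ?addr0 //; mylia.
Qed.

Lemma pp_W a : pp a.+1 a + sh (pp a) a = (~~ odd a)%:R.
Proof.
elim/ltn_ind: a => -[|[|a]] IH.
- by rewrite pp1 sh0 addr0.
- by rewrite ppSS !shS !sh0 !pp1 addr0 F2_add_self.
- have := IH a (ltnW (ltnSn _)).
  rewrite /= negbK => <-.
  rewrite ppSS !shS (proj1 (pp_top a.+2)).
  have -> : pp a.+2 a.+1 = 1 + sh (pp a) a.
    by rewrite ppSS (proj1 (pp_top a.+1)) shS.
  by rewrite addrACA F2_add_self add0r.
Qed.

Ltac ppsimp := rewrite ?doubleS ?ppSS ?shS ?sh0 ?pp0 ?pp1 /= ?addr0 ?add0r ?F2_add_self.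
Ltac f2 := rewrite ?shS ?sh0; repeat match goal with
  | |- context [pp ?a ?i] => case: (F2_cases (pp a i)) => ->
  | |- context [sh ?c ?i] => case: (F2_cases (sh c i)) => ->
  end; by apply/eqP.

Lemma pp_double b i :
  [/\ pp b.*2.+1 i.*2 = pp b.+1 i + sh (pp b) i,
      pp b.*2.+1 i.*2.+1 = pp b i,
      pp b.*2.+2 i.*2 = pp b.+1 i
    & pp b.*2.+2 i.*2.+1 = pp b.+1 i + sh (pp b) i].
Proof.
elim: b i => [|b IH] i.
- case: i => [|[|i]]; split; ppsimp => //.
- have [A0 B0 C0 D0] := IH 0%N.
  split; rewrite doubleS ppSS; case: i => [|i]; rewrite ?sh0 ?addr0.
  + by rewrite C0 ppSS !sh0 addr0.
  + have [A B C D] := IH i; have [A1 B1 C1 D1] := IH i.+1.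
    rewrite doubleS !shS C1 A ppSS !shS. f2.
  + by rewrite D0 sh0 addr0.
  + have [A B C D] := IH i; have [A1 B1 C1 D1] := IH i.+1.
    rewrite doubleS !shS D1 B. f2.
  + by rewrite ppSS !sh0 addr0 C0 ppSS !sh0 addr0.
  + have [A B C D] := IH i; have [A1 B1 C1 D1] := IH i.+1.
    rewrite ?doubleS ppSS ?shS C1 A C ppSS ?shS. f2.
  + by rewrite ppSS ?shS ?sh0 ?addr0 D0 ?sh0 ?addr0 ppSS ?sh0 ?addr0.
  + have [A B C D] := IH i; have [A1 B1 C1 D1] := IH i.+1.
    rewrite ?doubleS ppSS ?shS D1 B D ppSS ?shS. f2.
Qed.

Definition E (c : nat -> F2) (n : nat) : F2 := \sum_(i < n.+1) c i * rcoef (n - i).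

Lemma E_ext c c' n : (forall i, c i = c' i) -> E c n = E c' n.
Proof. by move=> h; apply: eq_bigr => i _; rewrite h. Qed.

Lemma E_add c c' n : E (fun i => c i + c' i) n = E c n + E c' n.
Proof. by rewrite /E -big_split; apply: eq_bigr => i _; rewrite mulrDl. Qed.

Lemma E_sh c n : E (sh c) n = sh (E c) n.
Proof.
rewrite /E big_ord_recl sh0 mul0r add0r; case: n => [|n]; first by rewrite big_ord0.
by rewrite shS; apply: eq_bigr => i _; rewrite shS subSS.
Qed.

Lemma sum_even (F : nat -> F2) k :
  \sum_(i < k.*2.+1) F i = \sum_(l < k.+1) F l.*2 + \sum_(l < k) F l.*2.+1.
Proof.
elim: k => [|k IH]; first by rewrite !big_ord_recr !big_ord0 /= add0r addr0.
rewrite doubleS big_ord_recr /= big_ord_recr /= IH.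
rewrite [\sum_(l < k.+2) _]big_ord_recr [\sum_(l < k.+1) F _.*2.+1]big_ord_recr /=.
rewrite -!addrA; congr (_ + _); rewrite doubleS; ring.
Qed.

Lemma sum_odd (F : nat -> F2) k :
  \sum_(i < k.*2.+2) F i = \sum_(l < k.+1) F l.*2 + \sum_(l < k.+1) F l.*2.+1.
Proof. rewrite big_ord_recr /= sum_even [\sum_(l < k.+1) F _.*2.+1]big_ord_recr /=; ring. Qed.

Lemma E_even c n : E c n.*2 = c n.*2 + sh (E (fun l => c l.*2.+1)) n.
Proof.
rewrite /E (sum_even (fun i => c i * rcoef (n.*2 - i))) big_ord_recr /= subnn rcoef0 mulr1.
rewrite big1 ?add0r; last first.
  move=> l _; have hl := ltn_ord l.
  rewrite (_ : (n.*2 - (nat_of_ord l).*2 = (n - l).-1.*2.+2)%N) ?rcoef_even ?mulr0 //; mylia.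
congr (_ + _); case: n => [|n]; first by rewrite big_ord0 sh0.
rewrite shS; apply: eq_bigr => l _; have hl := ltn_ord l.
rewrite (_ : (n.+1.*2 - (nat_of_ord l).*2.+1 = (n - l).*2.+1)%N) ?rcoef_odd //; mylia.
Qed.

Lemma E_odd c n : E c n.*2.+1 = E (fun l => c l.*2) n + c n.*2.+1.
Proof.
rewrite /E (sum_odd (fun i => c i * rcoef (n.*2.+1 - i))); congr (_ + _).
  apply: eq_bigr => l _; have hl := ltn_ord l.
  rewrite (_ : (n.*2.+1 - (nat_of_ord l).*2 = (n - l).*2.+1)%N) ?rcoef_odd //; mylia.
rewrite big_ord_recr /= subnn rcoef0 mulr1 big1 ?add0r //.
move=> l _; have hl := ltn_ord l.
rewrite (_ : (n.*2.+1 - (nat_of_ord l).*2.+1 = (n - l).-1.*2.+2)%N) ?rcoef_even ?mulr0 //; mylia.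
Qed.

Lemma ppdA b i : pp b.*2.+1 i.*2 = pp b.+1 i + sh (pp b) i.
Proof. by case: (pp_double b i). Qed.
Lemma ppdB b i : pp b.*2.+1 i.*2.+1 = pp b i.
Proof. by case: (pp_double b i). Qed.
Lemma ppdC b i : pp b.*2.+2 i.*2 = pp b.+1 i.
Proof. by case: (pp_double b i). Qed.
Lemma ppdD b i : pp b.*2.+2 i.*2.+1 = pp b.+1 i + sh (pp b) i.
Proof. by case: (pp_double b i). Qed.

Lemma Eev_even b k : E (pp b.*2.+2) k.*2 =
  pp b.+1 k + sh (E (pp b.+1)) k + sh (sh (E (pp b))) k.
Proof.
rewrite E_even ppdC -addrA; congr (_ + _).
case: k => [|k]; rewrite ?sh0 ?addr0 // !shS.
by rewrite (@E_ext _ (fun i => pp b.+1 i + sh (pp b) i) k (ppdD b)) E_add E_sh.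
Qed.

Lemma Eev_odd b k : E (pp b.*2.+2) k.*2.+1 =
  E (pp b.+1) k + pp b.+1 k + sh (pp b) k.
Proof.
rewrite E_odd ppdD addrA; congr (_ + _ + _).
exact: (@E_ext _ _ k (ppdC b)).
Qed.

Lemma Eod_even b k : E (pp b.*2.+1) k.*2 =
  pp b.+1 k + sh (pp b) k + sh (E (pp b)) k.
Proof.
rewrite E_even ppdA; congr (_ + _ + _).
case: k => [|k]; rewrite ?sh0 // !shS.
exact: (@E_ext _ _ k (ppdB b)).
Qed.

Lemma Eod_odd b k : E (pp b.*2.+1) k.*2.+1 =
  E (pp b.+1) k + sh (E (pp b)) k + pp b k.
Proof.
rewrite E_odd ppdB; congr (_ + _).
by rewrite (@E_ext _ (fun i => pp b.+1 i + sh (pp b) i) k (ppdA b)) E_add E_sh.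
Qed.

Definition Qp (a : nat) :=
  [/\ (forall n, (a <= n)%N -> (n < a.*2)%N -> E (pp a) n = 0),
      E (pp a) a.*2 = 1 & sh (E (pp a)) a = (odd a)%:R].

Lemma split2 n : exists k, n = k.*2 \/ n = k.*2.+1.
Proof.
have h := odd_double_half n; exists n./2; case: (odd n) in h *; [right|left]; by rewrite -[in LHS]h.
Qed.

Lemma ppz a i : (a < i)%N -> pp a i = 0.
Proof. exact: (proj2 (pp_top a)). Qed.
Lemma ppa a : pp a a = 1.
Proof. exact: (proj1 (pp_top a)). Qed.

Lemma E0 n : E (pp 0) n = rcoef n.
Proof.
rewrite /E big_ord_recl big1 ?addr0 => [|i _]; first by rewrite pp0 /= mul1r subn0.
by rewrite pp0 /= mul0r.
Qed.

Lemma F2b (b : bool) : (b%:R + (~~ b)%:R : F2) = 1.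
Proof. by case: b; apply/eqP. Qed.

Lemma Qev b : Qp b.+1 -> Qp b -> Qp b.*2.+2.
Proof.
case=> Z1 O1 V1 [Z0 O0 V0]; rewrite shS in V1; split.
- move=> n h1 h2; have [k [hn|hn]] := split2 n; subst n.
  + rewrite Eev_even.
    case: (ltngtP k b.+1) => hk.
    * exfalso; move: h1 hk; mylia.
    * case: k hk h1 h2 => [//|k] hk h1 h2.
      rewrite ppz // !shS Z1; try (move: h1 h2; mylia).
      case: k hk h1 h2 => [//|k] hk h1 h2.
      rewrite shS Z0 ?addr0 //; move: h1 h2 hk; mylia.
    * subst k; rewrite ppa !shS V1 V0 /=. by case: (odd b); apply/eqP.
  + rewrite Eev_odd Z1; try (move: h1 h2; mylia).
    case: (ltngtP k b.+1) => hk.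
    * exfalso; move: h1 hk; mylia.
    * case: k hk h1 h2 => [//|k] hk h1 h2.
      by rewrite shS !ppz ?addr0 //; move: hk; mylia.
    * by subst k; rewrite ppa shS ppa add0r F2_add_self.
- rewrite Eev_even ppz; last by mylia.
  rewrite !shS Z1; try mylia.
  by rewrite O0 !add0r.
- rewrite shS Eev_odd V1 -addrA pp_W /= odd_double.
  by case: (odd b); apply/eqP.
Qed.

Lemma Qod b : Qp b.+2 -> Qp b.+1 -> Qp (b.+1).*2.+1.
Proof.
case=> Z2 O2 V2 [Z1 O1 V1]; rewrite shS in V1; rewrite shS in V2; split.
- move=> n h1 h2; have [k [hn|hn]] := split2 n; subst n.
  + rewrite Eod_even.
    case: (ltngtP k b.+2) => hk.
    * exfalso; move: h1 hk; mylia.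
    * case: k hk h1 h2 => [//|k] hk h1 h2.
      rewrite !shS !ppz ?Z1 ?addr0 //; move: h1 h2 hk; mylia.
    * subst k; rewrite ppa !shS ppa Z1 ?addr0 ?F2_add_self //; mylia.
  + rewrite Eod_odd.
    case: (ltngtP k b.+1) => hk.
    * exfalso; move: h1 hk; mylia.
    * rewrite Z2; try (move: h1 h2 hk; mylia).
      case: k hk h1 h2 => [//|k] hk h1 h2.
      rewrite shS Z1 ?ppz ?addr0 //; move: h1 h2 hk; mylia.
    * subst k; rewrite V2 shS V1 ppa /=. by case: (odd b); apply/eqP.
- rewrite Eod_even ppz; last by mylia.
  rewrite !shS ppz; last by mylia.
  by rewrite O1 !add0r.
- rewrite shS Eod_even pp_W shS V1 /= odd_double /=.
  by case: (odd b); apply/eqP.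
Qed.

Lemma Qall a : Qp a.
Proof.
elim/ltn_ind: a => -[|[|a]] IH.
- rewrite /Qp; split.
  + by move=> n; rewrite double0; case: n.
  + by rewrite E0 rcoef0.
  + by rewrite sh0.
- rewrite /Qp.
  have E10 : E (pp 1) 0 = 1.
    by rewrite (Eod_even 0%N 0%N) pp1 !sh0 !addr0.
  split.
  + move=> n h1 h2; have -> : n = 0.*2.+1 by move: h1 h2; mylia.
    by rewrite (Eod_odd 0%N 0%N) E10 sh0 pp0 addr0 F2_add_self.
  + by rewrite (Eod_even 0%N 1%N) pp1 !shS pp0 E0 rcoef0 /= F2_add_self add0r.
  + by rewrite shS E10.
- have [b [ha|ha]] := split2 a; subst a.
  + apply: Qev; apply: IH; mylia.
  + have -> : b.*2.+1.+2 = (b.+1).*2.+1 by rewrite doubleS.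
    apply: Qod; apply: IH; mylia.
Qed.



Definition i0 : 'I_2 := ord0.
Definition i1 : 'I_2 := Ordinal (isT : (1 < 2)%N).

Definition mon (D i : nat) : 'X_{1..2} := (U_(i0) *+ (D - i) + U_(i1) *+ i)%MM.

Lemma mon0 D i : mon D i i0 = (D - i)%N.
Proof. by rewrite /mon mnmDE !mulmnE !mnm1E eqxx /= mul1n mul0n addn0. Qed.
Lemma mon1 D i : mon D i i1 = i.
Proof. by rewrite /mon mnmDE !mulmnE !mnm1E eqxx /= mul1n mul0n. Qed.

Lemma mdeg_mon D i : (i <= D)%N -> mdeg (mon D i) = D.
Proof. by move=> h; rewrite /mon mdegD !mdegMn !mdeg1 !mul1n subnK. Qed.

Lemma mon_inj D i j : mon D i = mon D j -> i = j.
Proof. by move=> h; rewrite -(mon1 D i) h mon1. Qed.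

Lemma monS D i : (i <= D)%N -> mon D.+1 i.+1 = (U_(i1) + mon D i)%MM.
Proof.
move=> h; apply/mnmP => j; rewrite mnmDE mnm1E.
case: j => -[|[|//]] hj.
- have -> : Ordinal hj = i0 by apply/val_inj.
  by rewrite !mon0.
- have -> : Ordinal hj = i1 by apply/val_inj.
  by rewrite !mon1 /= add1n.
Qed.

Lemma monX D i : (i <= D)%N -> mon D.+1 i = (U_(i0) + mon D i)%MM.
Proof.
move=> h; apply/mnmP => j; rewrite mnmDE mnm1E.
case: j => -[|[|//]] hj.
- have -> : Ordinal hj = i0 by apply/val_inj.
  rewrite !mon0 /=; mylia.
- have -> : Ordinal hj = i1 by apply/val_inj.
  by rewrite !mon1.
Qed.

Definition hom (D : nat) (c : nat -> F2) : R2 := \sum_(i < D.+1) c i *: 'X_[mon D i].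

Lemma hom_coef D c m : (hom D c)@_m = \sum_(i < D.+1) c i * (mon D i == m)%:R.
Proof.
rewrite /hom; elim/big_rec2: _ => [|i y p _ <-]; by rewrite ?mcoeff0 ?mcoeffD ?mcoeffZ ?mcoeffX.
Qed.

Lemma hom_coef_mon D c j : (j <= D)%N -> (hom D c)@_(mon D j) = c j.
Proof.
move=> hj; rewrite hom_coef (bigD1 (Ordinal (hj : (j < D.+1)%N))) //= eqxx mulr1.
rewrite big1 ?addr0 // => i hi; case: eqP => [/mon_inj h|_]; last by rewrite mulr0.
by exfalso; move: hi; rewrite -val_eqE /= h eqxx.
Qed.

Definition mons D := [seq mon D i | i <- iota 0 D.+1].

Lemma mons_uniq D : uniq (mons D).
Proof. rewrite map_inj_uniq ?iota_uniq //; exact: mon_inj. Qed.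

Lemma msupp_hom D c : {subset msupp (hom D c) <= mons D}.
Proof.
move=> m; rewrite mcoeff_msupp hom_coef; apply: contraR => hm.
rewrite big1 // => i _; case: eqP => [h|_]; last by rewrite mulr0.
have hin : m \in mons D by rewrite -h; apply/mapP; exists (nat_of_ord i) => //; rewrite mem_iota leq0n add0n ltn_ord.
by rewrite hin in hm.
Qed.

Lemma sum_msupp (p : R2) (s : seq 'X_{1..2}) (G : 'X_{1..2} -> F2) :
  uniq s -> {subset msupp p <= s} -> (forall m, p@_m = 0 -> G m = 0) ->
  \sum_(m <- msupp p) G m = \sum_(m <- s) G m.
Proof.
move=> us sub hG.
rewrite [RHS](bigID (fun m => m \in msupp p)) /= [X in _ + X]big1 ?addr0; last first.
  by move=> m /memN_msupp_eq0 /hG.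
have hp : perm_eq (msupp p) [seq m <- s | m \in msupp p].
  apply: uniq_perm.
  - exact: msupp_uniq.
  - exact: filter_uniq.
  - move=> m; rewrite mem_filter; case h: (m \in msupp p) => //=; by rewrite sub.
by rewrite -[RHS]big_filter; apply: perm_big.
Qed.

Lemma I20 : (0 : 'I_2) = i0. Proof. by apply/val_inj. Qed.
Lemma I21 : (1 : 'I_2) = i1. Proof. by apply/val_inj. Qed.

Lemma tdeg_hom D c : c D != 0 -> tdeg (hom D c) = D.
Proof.
move=> hc; rewrite /tdeg msizeE; apply/eqP; rewrite -eqSS prednK ?ltn0Sn //; last first.
  have hm : mon D D \in msupp (hom D c) by rewrite mcoeff_msupp hom_coef_mon.
  exact: (leq_trans _ (@leq_bigmax_seq _ _ xpredT (fun m => (mdeg m).+1) _ hm isT)).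
rewrite eqn_leq; apply/andP; split.
  apply/bigmax_leqP_seq => m hm _; have := @msupp_hom D c m hm.
  by case/mapP => i; rewrite mem_iota leq0n add0n ltnS => hi ->; rewrite mdeg_mon.
have hm : mon D D \in msupp (hom D c) by rewrite mcoeff_msupp hom_coef_mon.
apply: (leq_trans _ (@leq_bigmax_seq _ _ xpredT (fun m => (mdeg m).+1) _ hm isT)).
by rewrite mdeg_mon.
Qed.

Lemma eval_mon D i : ('X_[mon D i] : R2).@[pt01] = (D - i == 0)%N%:R.
Proof.
rewrite mevalX !big_ord_recr big_ord0 /=.
have -> : widen_ord (leqnSn 1) ord_max = i0 :> 'I_2 by apply/val_inj.
have -> : (ord_max : 'I_2) = i1 by apply/val_inj.
rewrite mon0 mon1 mul1r expr1n mulr1.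
by case: (D - i)%N => [|k]; rewrite ?expr0 // exprS mul0r.
Qed.

Lemma eval_hom D c : (hom D c).@[pt01] = c D.
Proof.
rewrite /hom raddf_sum big_ord_recr /= big1 ?add0r.
  by rewrite mevalZ eval_mon subnn mulr1.
move=> i _; rewrite mevalZ eval_mon.
have hi := ltn_ord i.
by rewrite (_ : (D - i == 0)%N = false) ?mulr0 //; apply/negbTE; rewrite subn_eq0 -ltnNge.
Qed.

Lemma homD D c c' : hom D c + hom D c' = hom D (fun i => c i + c' i).
Proof. by rewrite /hom -big_split; apply: eq_bigr => i _; rewrite scalerDl. Qed.

Lemma hom_ext D c c' : (forall i, (i <= D)%N -> c i = c' i) -> hom D c = hom D c'.
Proof. by move=> h; apply: eq_bigr => i _; rewrite h // -ltnS. Qed.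

Lemma homZ D c : Z * hom D c = hom D.+1 (sh c).
Proof.
rewrite /hom [RHS]big_ord_recl.
rewrite sh0 scale0r add0r mulr_sumr.
apply: eq_bigr => i _.
have -> : lift ord0 i = i.+1 :> nat by [].
rewrite shS -scalerAr (@monS D i (ltn_ord i)) mpolyXD /Z I21.
by [].
Qed.

Lemma homX D c : c D.+1 = 0 -> X * hom D c = hom D.+1 c.
Proof.
move=> h; rewrite /hom [RHS]big_ord_recr /= h scale0r addr0 mulr_sumr.
apply: eq_bigr => i _.
rewrite -scalerAr (@monX D i (ltn_ord i)) mpolyXD /X I20.
by [].
Qed.

Lemma cond_eq (i j n D : nat) : (i < n)%N -> (j <= D)%N -> (D < n)%N ->
  ((((D-j)%N)%:Z - i%:Z == D%:Z + (1 - n%:Z)) && (j%:Z + (1 - n%:Z + i%:Z) == 0))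
  = (i == n.-1 - j)%N.
Proof.
move=> h1 h2 h3. apply/andP/eqP. case=> /eqP ? /eqP ?; lia. move=> ?; split; apply/eqP; lia.
Qed.

Lemma Delta_hom D c n : (D < n)%N -> c D != 0 -> (forall i, (D < i)%N -> c i = 0) ->
  Delta (hom D c) n = E c n.-1.
Proof.
move=> hDn hc hz; rewrite /Delta tdeg_hom // ifT; last by lia.
rewrite (@sum_msupp _ (mons D)); last 3 first.
- exact: mons_uniq.
- exact: msupp_hom.
- move=> m hm; apply: big1 => i _; rewrite hm mul0r; by case: ifP.
rewrite big_map (_ : iota 0 D.+1 = index_iota 0 D.+1); last by rewrite /index_iota subn0.
rewrite big_mkord I20 I21.
rewrite (eq_bigr (fun i : 'I_D.+1 => c i * rcoef (n.-1 - i))); last first.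
  move=> i _; have hi : (i <= D)%N by rewrite -ltnS.
  have hk : (n.-1 - i < n)%N by lia.
  rewrite (bigD1 (Ordinal hk)) //= mon0 mon1 hom_coef_mon // cond_eq // eqxx.
  rewrite big1 ?addr0 // => k hk'.
  rewrite cond_eq //; case: eqP => // hkk.
  by exfalso; move: hk'; rewrite -val_eqE /= hkk eqxx.
rewrite (big_ord_widen n (fun i => c i * rcoef (n.-1 - i)) hDn) /E prednK ?(leq_ltn_trans (leq0n D)) //.
rewrite big_mkcond; apply: eq_bigr => i _; case: ifP => // /negbT; rewrite -leqNgt => hi.
by rewrite hz ?mul0r.
Qed.



Lemma mon10 : mon 1 0 = U_(i0)%MM.
Proof.
apply/mnmP => j; rewrite mnm1E; case: j => -[|[|//]] hj.
- have -> : Ordinal hj = i0 by apply/val_inj. by rewrite mon0 eqxx.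
- have -> : Ordinal hj = i1 by apply/val_inj. by rewrite mon1.
Qed.
Lemma mon11 : mon 1 1 = U_(i1)%MM.
Proof.
apply/mnmP => j; rewrite mnm1E; case: j => -[|[|//]] hj.
- have -> : Ordinal hj = i0 by apply/val_inj. by rewrite mon0.
- have -> : Ordinal hj = i1 by apply/val_inj. by rewrite mon1 eqxx.
Qed.

Lemma hom1 c : hom 1 c = c 0%N *: X + c 1%N *: Z.
Proof.
rewrite /hom !big_ord_recr big_ord0 /= mon10 mon11 /X /Z I20 I21.
by rewrite add0r.
Qed.

Lemma step_even k p : Deltak k p = 0 -> step k p = (p.1, Z * p.2).
Proof. by move=> h; rewrite /step h eqxx. Qed.

Lemma step_odd k p : Deltak k p = 1 -> dd p = 1 -> step k p = (X * p.1 + p.2, Z * p.1).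
Proof. by move=> h1 h2; rewrite /step h1 h2 /= expr1. Qed.

Lemma fgS k : fg k.+1 = step k (fg k). Proof. by []. Qed.

Lemma fg_closed j :
  fg j.*2 = (hom j.+1 (pp j.+1), hom j.+1 (sh (pp j))) /\
  fg j.*2.+1 = (hom j.+1 (pp j.+1), hom j.+2 (sh (sh (pp j)))).
Proof.
have Hev : forall j, fg j.*2 = (hom j.+1 (pp j.+1), hom j.+1 (sh (pp j))) ->
                     fg j.*2.+1 = (hom j.+1 (pp j.+1), hom j.+2 (sh (sh (pp j)))).
  move=> i hi; rewrite fgS step_even hi /= ?homZ //.
  rewrite /Deltak /= Delta_hom; [|mylia|by rewrite ppa|by move=> l; exact: ppz].
  have [Zq _ _] := Qall i.+1; apply: Zq; mylia.
elim: j => [|j [IH1 IH2]].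
  have h0 : fg 0.*2 = (hom 1 (pp 1), hom 1 (sh (pp 0))).
    by rewrite hom1 hom1 !pp1 sh0 shS pp0 /= !scale1r scale0r add0r.
  by split=> //; apply: Hev.
suff h : fg j.+1.*2 = (hom j.+2 (pp j.+2), hom j.+2 (sh (pp j.+1))).
  by split=> //; apply: Hev.
rewrite doubleS fgS step_odd IH2 /=.
- rewrite homX ?ppz // homD homZ; congr (_, _); apply: hom_ext => i _; by rewrite ppSS.
- rewrite /Deltak /= Delta_hom; [|mylia|by rewrite ppa|by move=> l; exact: ppz].
  by have [_ Oq _] := Qall j.+1; rewrite -Oq doubleS.
- rewrite /dd /= !tdeg_hom ?shS ?ppa ?F2_10 //.
  lia.
Qed.

Theorem theorem4 (k : nat) :
  [/\ (~~ odd k -> Deltak k (fg k) = 0) /\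
      (odd k -> Deltak k (fg k) = 1 /\ dd (fg k) = 1),
      fg k.+1 = (if ~~ odd k then ((fg k).1, Z * (fg k).2)
                 else (X * (fg k).1 + (fg k).2, Z * (fg k).1)),
      tdeg (fg k.+1).1 = ((k + 3) %/ 2)%N
    & ((fg k.+1).1).@[pt01] = 1 /\ ((fg k.+1).2).@[pt01] = 1].
Proof.
have [j [hk|hk]] := split2 k; subst k.
- have [C1 C2] := fg_closed j.
  have D0 : Deltak j.*2 (fg j.*2) = 0.
    rewrite /Deltak C1 /= Delta_hom; [|mylia|by rewrite ppa|by move=> l; exact: ppz].
    have [Zq _ _] := Qall j.+1; apply: Zq; mylia.
  rewrite odd_double; split.
  + by split.
  + by rewrite fgS (step_even _ _ D0).
  + rewrite C2 /= tdeg_hom ?ppa //; mylia.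
  + by rewrite C2; split; rewrite eval_hom ?shS ?ppa.
- have [C1 C2] := fg_closed j.
  have [C3 _] := fg_closed j.+1.
  rewrite doubleS in C3.
  have D1 : Deltak j.*2.+1 (fg j.*2.+1) = 1.
    rewrite /Deltak C2 /= Delta_hom; [|mylia|by rewrite ppa|by move=> l; exact: ppz].
    by have [_ Oq _] := Qall j.+1; rewrite -Oq doubleS.
  have dd1 : dd (fg j.*2.+1) = 1.
    rewrite /dd C2 /= !tdeg_hom ?shS ?ppa //; lia.
  have oo : odd j.*2.+1 by rewrite /= odd_double.
  rewrite oo; split.
  + by split.
  + by rewrite fgS (step_odd _ _ D1 dd1).
  + rewrite (_ : (fg j.*2.+2).1 = hom j.+2 (pp j.+2)) ?C3 // tdeg_hom ?ppa //; mylia.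
  + by rewrite C3; split; rewrite eval_hom ?shS ?ppa.
Qed.
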